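(* Let $A\in\mathbb{R}^{m\times n}$ and let $N\subseteq[n]$ be such that the submatrix $A_{[n]\setminus N}$ has full column rank. Then for every $z\in\ker(A)$, $\|z\|_\infty\le\kappa_A\|z_N\|_1$.
   Context: $A_S$ denotes the submatrix of $A$ formed by the columns in $S$, and $z_N$ the restriction of $z$ to coordinates in $N$. An elementary vector of $\ker(A)$ is a nonzero $g\in\ker(A)$ with inclusion-minimal support among nonzero vectors of $\ker(A)$. The circuit imbalance is $\kappa_A=\max\{|g_i|/|g_j|: g \text{ elementary},\ i,j\in\mathrm{supp}(g)\}$. *)

(* Defs.v *)
From HB Require Import structures.
From mathcomp Require Import all_boot all_order all_algebra.
From mathcomp Require Import boolp classical_sets reals.
Set Implicit Arguments. Unset Strict Implicit. Unset Printing Implicit Defensive.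
Import Order.TTheory GRing.Theory Num.Theory.
Local Open Scope ring_scope.

(* vectors of R^n are column vectors 'cV[R]_n; z i 0 is the i-th coordinate *)

Definition in_ker (R : fieldType) m n (A : 'M[R]_(m, n)) (z : 'cV[R]_n) : Prop :=
  A *m z = 0.

Definition supp (R : fieldType) n (z : 'cV[R]_n) : {set 'I_n} :=
  [set i | z i 0 != 0].

Definition elementary (R : fieldType) m n (A : 'M[R]_(m, n)) (g : 'cV[R]_n) : Prop :=
  [/\ g != 0, in_ker A g &
      forall h : 'cV[R]_n, h != 0 -> in_ker A h ->
        supp h \subset supp g -> supp h = supp g].

(* circuit imbalance kappa_A = max of |g_i|/|g_j| over elementary g and
   i, j in supp g (the max is a sup of a finite set; if ker A = 0 the set is
   empty and the value is the sup of the empty set, namely 0) *)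
Definition kappa (R : realType) m n (A : 'M[R]_(m, n)) : R :=
  sup [set r : R | exists g : 'cV[R]_n, exists i j : 'I_n,
        [/\ elementary A g, i \in supp g, j \in supp g &
            r = `|g i 0| / `|g j 0|]].

Definition colsubset (R : Type) m n (A : 'M[R]_(m, n)) (S : {set 'I_n})
  : 'M[R]_(m, #|S|) :=
  colsub (fun j : 'I_#|S| => enum_val j) A.

Definition norm_inf (R : numDomainType) n (z : 'cV[R]_n) : R :=
  \big[Num.max/0]_(i < n) `|z i 0|.

Definition norm1_on (R : numDomainType) n (z : 'cV[R]_n) (N : {set 'I_n}) : R :=
  \sum_(i in N) `|z i 0|.

(* Main.v *)
Require Import Defs.
From HB Require Import structures.
From mathcomp Require Import all_boot all_order all_algebra.
From mathcomp Require Import boolp classical_sets reals.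
From mathcomp Require Import ring lra.
Import Order.TTheory GRing.Theory Num.Theory.
Local Open Scope ring_scope.

Set Implicit Arguments. Unset Strict Implicit.
Section S.
Variable R : realType.

Lemma reduce n (z h : 'cV[R]_n) k0 :
  (forall j, z j 0 = 0 -> h j 0 = 0) -> 0 < h k0 0 * z k0 0 ->
  exists t, exists k, [/\ 0 < t, z k 0 != 0, z k 0 - t * h k 0 = 0 &
     forall j, 0 <= (z j 0 - t * h j 0) * z j 0].
Proof.
move=> hz hk0.
have zk0 : z k0 0 != 0 by apply/eqP => e; move: hk0; rewrite e mulr0 ltxx.
have r0 : 0 < h k0 0 / z k0 0.
  have -> : h k0 0 / z k0 0 = (h k0 0 * z k0 0) / (z k0 0 ^+ 2).
    by rewrite expr2 invfM mulrA mulfK.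
  by apply: divr_gt0 => //; rewrite exprn_even_gt0.
case: (@arg_maxP _ _ 'I_n k0 xpredT (fun j => h j 0 / z j 0)) => // k _ kmax.
set r := h k 0 / z k 0.
have rpos : 0 < r by apply: lt_le_trans r0 (kmax _ isT).
have zk : z k 0 != 0 by apply/eqP => e; move: rpos; rewrite /r e invr0 mulr0 ltxx.
have hk : h k 0 != 0 by apply/eqP => e; move: rpos; rewrite /r e mul0r ltxx.
exists (r^-1), k; split => //.
- by rewrite invr_gt0.
- by rewrite /r invf_div divfK // subrr.
move=> j.
have [zj0|zj0] := eqVneq (z j 0) 0; first by rewrite zj0 mulr0.
have qle : h j 0 / z j 0 <= r := kmax j isT.
set q := h j 0 / z j 0 in qle.
have -> : h j 0 = q * z j 0 by rewrite /q divfK.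
have rs : r * r^-1 = 1 by rewrite mulfV // gt_eqF.
have s0 : 0 < r^-1 by rewrite invr_gt0.
set s := r^-1 in rs s0 *.
have sq : s * q <= 1 by rewrite -rs mulrC ler_wpM2r // ltW.
have -> : (z j 0 - s * (q * z j 0)) * z j 0 = (z j 0 * z j 0) * (1 - s * q) by ring.
by apply: mulr_ge0; [by rewrite -expr2 sqr_ge0 | rewrite subr_ge0].
Qed.

Lemma norm_conf (a b c : R) : 0 <= a * c -> 0 <= b * c -> c != 0 ->
  `|a + b| = `|a| + `|b|.
Proof.
move=> ac bc c0.
have [cp|cn|ce] := ltgtP 0 c; last by move: c0; rewrite -ce eqxx.
- have a0 : 0 <= a by rewrite -(pmulr_lge0 _ cp).
  have b0 : 0 <= b by rewrite -(pmulr_lge0 _ cp).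
  by rewrite !ger0_norm // addr_ge0.
- have a0 : a <= 0 by rewrite -(nmulr_lge0 _ cn).
  have b0 : b <= 0 by rewrite -(nmulr_lge0 _ cn).
  rewrite (ler0_norm a0) (ler0_norm b0) ler0_norm ?opprD //; lra.
Qed.

Lemma le_sum_term (I : finType) (F : I -> R) i :
  (forall j, 0 <= F j) -> F i <= \sum_j F j.
Proof. by move=> h; rewrite (bigD1 i) //= lerDl sumr_ge0. Qed.

Lemma nonzero_coord n (h : 'cV[R]_n) : h != 0 -> exists j, h j 0 != 0.
Proof.
move=> hn0; case: (pselect (exists j, h j 0 != 0)) => // nex; exfalso.
move/eqP: hn0; apply; apply/matrixP => a b; rewrite (ord1 b) !mxE.
by apply/eqP; apply/negPn/negP => ha; apply: nex; exists a.
Qed.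



Lemma ker_full m n (A : 'M[R]_(m, n)) (N : {set 'I_n}) (z : 'cV[R]_n) :
  \rank (colsubset A (~: N)) = #|~: N| -> in_ker A z ->
  (forall j, j \in N -> z j 0 = 0) -> z = 0.
Proof.
move=> rk hk hN.
set B := colsubset A (~: N).
pose y : 'cV[R]_#|~: N| := \col_j z (enum_val j) 0.
have By : B *m y = A *m z.
  apply/matrixP => i b; rewrite !mxE (bigID (fun l => l \in ~: N)) /=.
  rewrite [X in _ = _ + X]big1 ?addr0; last first.
    move=> l; rewrite finset.in_setC negbK => /hN; rewrite (ord1 b) => ->; by rewrite mulr0.
  rewrite [RHS]big_enum_val /=.
  by apply: eq_bigr => j _; rewrite !mxE (ord1 b).
have y0 : y = 0.
  have rf : row_free B^T by rewrite /row_free mxrank_tr rk.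
  apply: trmx_inj; rewrite trmx0; apply: (row_free_inj rf).
  by rewrite -trmx_mul By hk mul0mx trmx0.
apply/matrixP => l b; rewrite (ord1 b) mxE.
have [lN|lN] := boolP (l \in N); first exact: hN.
have lC : l \in ~: N by rewrite finset.in_setC.
have := congr1 (fun M : 'cV[R]_#|~: N| => M (enum_rank_in lC l) 0) y0.
by rewrite /= !mxE enum_rankK_in.
Qed.

Lemma elem_prop m n (A : 'M[R]_(m, n)) (g g' : 'cV[R]_n) :
  elementary A g -> elementary A g' -> supp g' = supp g ->
  exists2 c, c != 0 & g' = c *: g.
Proof.
move=> [gn0 gk gmin] [g'n0 g'k _] sg.
have [k gk0] := nonzero_coord gn0.
pose c := g' k 0 / g k 0.
pose h := g' - c *: g.
have hk : in_ker A h.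
  by rewrite /in_ker /h mulmxBr -scalemxAr g'k gk scaler0 subr0.
have hkk : h k 0 = 0 by rewrite /h !mxE /c divfK // subrr.
have h0 : h = 0.
  apply/eqP; apply/negPn/negP => hn0.
  have sub : supp h \subset supp g.
    apply/fintype.subsetP => j; rewrite !inE /h !mxE; apply: contraNN => /eqP gj.
    have : j \notin supp g' by rewrite sg inE gj eqxx.
    by rewrite inE negbK gj mulr0 subr0.
  have := gmin h hn0 hk sub => /setP/(_ k).
  by rewrite !inE hkk eqxx gk0.
have cn0 : c != 0.
  apply/eqP => c0; move: h0; rewrite /h c0 scale0r subr0 => e.
  by move: g'n0; rewrite e eqxx.
by exists c => //; apply/eqP; rewrite -subr_eq0 -/h h0.
Qed.


Section K.
Variables (m n : nat) (A : 'M[R]_(m, n)).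

Let kset : set R := fun r => exists g : 'cV[R]_n, exists i j : 'I_n,
        [/\ elementary A g, i \in supp g, j \in supp g &
            r = `|g i 0| / `|g j 0|].

Lemma kappaE : kappa A = sup kset. Proof. by []. Qed.

Lemma kset_ub : has_ubound kset.
Proof.
pose rep (S : {set 'I_n}) : 'cV[R]_n :=
  match pselect (exists g, elementary A g /\ supp g = S) with
  | left e => projT1 (cid e) | right _ => 0 end.
have repP : forall g, elementary A g ->
    elementary A (rep (supp g)) /\ supp (rep (supp g)) = supp g.
  move=> g eg; rewrite /rep; case: pselect => [e|ne]; last first.
    by exfalso; apply: ne; exists g.
  by case: (cid e).
exists (\sum_(S : {set 'I_n}) \sum_(i : 'I_n) \sum_(j : 'I_n)
          `|rep S i 0| / `|rep S j 0|).
move=> r [g [i [j [eg _ _ ->]]]].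
have [er sr] := repP g eg.
have [c c0 e] := elem_prop eg er sr.
have -> : `|g i 0| / `|g j 0| = `|rep (supp g) i 0| / `|rep (supp g) j 0|.
  by rewrite e !mxE !normrM invfM mulrACA mulfV ?normr_eq0 // mul1r.
have nn : forall S i j, 0 <= `|rep S i 0| / `|rep S j 0| by move=> *; rewrite divr_ge0.
set rg := rep (supp g).
have h1 : \sum_i \sum_j `|rg i 0| / `|rg j 0| <= \sum_(S : {set 'I_n}) \sum_i \sum_j `|rep S i 0| / `|rep S j 0|.
  apply: (le_sum_term (F := fun S => \sum_i \sum_j `|rep S i 0| / `|rep S j 0|)).
  by move=> S; apply: sumr_ge0 => i' _; apply: sumr_ge0 => j' _; exact: nn.
have h2 : \sum_j `|rg i 0| / `|rg j 0| <= \sum_i \sum_j `|rg i 0| / `|rg j 0|.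
  apply: (le_sum_term (F := fun i => \sum_j `|rg i 0| / `|rg j 0|)).
  by move=> i'; apply: sumr_ge0 => j' _; exact: nn.
have h3 : `|rg i 0| / `|rg j 0| <= \sum_j `|rg i 0| / `|rg j 0|.
  apply: (le_sum_term (F := fun j => `|rg i 0| / `|rg j 0|)) => j'; exact: nn.
exact: le_trans h3 (le_trans h2 h1).
Qed.

Lemma kset_le r : kset r -> r <= kappa A.
Proof.
move=> kr; rewrite kappaE; apply: sup_upper_bound => //.
split; [by exists r | exact: kset_ub].
Qed.

Lemma kappa_ge0 : 0 <= kappa A.
Proof.
case: (pselect (exists r, kset r)) => [[r kr]|ne].
  apply: le_trans (kset_le kr).
  by case: kr => g [i [j [_ _ _ ->]]]; rewrite divr_ge0.
rewrite kappaE (_ : kset = set0) ?sup0 //.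
by apply/seteqP; split => x // kx; exfalso; apply: ne; exists x.
Qed.


Variable N : {set 'I_n}.
Hypothesis rk : \rank (colsubset A (~: N)) = #|~: N|.

Lemma supp_sub_zero (h z : 'cV[R]_n) : supp h \subset supp z ->
  forall j, z j 0 = 0 -> h j 0 = 0.
Proof.
move=> hsub j zj; apply/eqP; apply/negPn/negP => hj.
by have := fintype.subsetP hsub j; rewrite !inE hj zj eqxx => /(_ isT).
Qed.

Lemma main k (z : 'cV[R]_n) : (#|supp z| < k)%N -> in_ker A z ->
  forall i, `|z i 0| <= kappa A * norm1_on z N.
Proof.
elim: k z => [//|k IH] z hsz hk i.
case: (pselect (exists h : 'cV[R]_n, [/\ h != 0, in_ker A h,
   (forall j, 0 <= h j 0 * z j 0), supp h \subset supp z & supp h != supp z])).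
  move=> [h [hn0 hker hconf hsub hne]].
  have hz0 := supp_sub_zero hsub.
  have [j0 hj0] := nonzero_coord hn0.
  have zj0 : z j0 0 != 0 by apply: contraNN hj0 => /eqP /hz0 ->.
  have pos : 0 < h j0 0 * z j0 0 by rewrite lt_def mulf_neq0 ?hconf.
  have [t [k0 [t0 zk wk wconf]]] := reduce hz0 pos.
  pose w := z - t *: h.
  have wE : forall j, w j 0 = z j 0 - t * h j 0 by move=> j; rewrite !mxE.
  have wker : in_ker A w.
    by rewrite /in_ker /w mulmxBr -scalemxAr hk hker scaler0 subr0.
  have thker : in_ker A (t *: h) by rewrite /in_ker -scalemxAr hker scaler0.
  have wprop : supp w \proper supp z.
    apply/fintype.properP; split.
      apply/fintype.subsetP => j; rewrite !inE wE; apply: contraNN => /eqP zj.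
      by rewrite zj (hz0 _ zj) mulr0 subrr.
    by exists k0; rewrite !inE ?wE ?wk ?eqxx.
  have sth : supp (t *: h) = supp h.
    by apply/setP => j; rewrite !inE mxE mulf_eq0 negb_or gt_eqF.
  have hprop : supp (t *: h) \proper supp z by rewrite sth finset.properEneq hne hsub.
  have IHw := IH w (leq_trans (proper_card wprop) hsz) wker.
  have IHh := IH (t *: h) (leq_trans (proper_card hprop) hsz) thker.
  have split : forall j, `|z j 0| = `|w j 0| + `|(t *: h) j 0|.
    move=> j; have [zj|zj] := eqVneq (z j 0) 0.
      by rewrite wE !mxE zj (hz0 _ zj) !mulr0 subrr normr0 addr0.
    rewrite wE mxE -(norm_conf (b := t * h j 0) (wconf j) _ zj) ?subrK //.
    by rewrite -mulrA mulr_ge0 // ltW.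
  have n1 : norm1_on z N = norm1_on w N + norm1_on (t *: h) N.
    by rewrite /norm1_on -big_split /=; apply: eq_bigr => j _; exact: split.
  by rewrite split n1 mulrDr lerD.
move=> nex.
have [->|zn0] := eqVneq z 0.
  by rewrite /norm1_on big1 ?mxE ?normr0 ?mulr0 // => j _; rewrite mxE normr0.
have el : elementary A z.
  split => // h hn0 hker hsub; apply/eqP; apply/negPn/negP => hne.
  have hz0 := supp_sub_zero hsub.
  have [j0 hj0] := nonzero_coord hn0.
  have zj0 : z j0 0 != 0 by apply: contraNN hj0 => /eqP /hz0 ->.
  have [k1 k1z k1h] : exists2 k1, k1 \in supp z & k1 \notin supp h.
    apply/fintype.subsetPn; move: hne; rewrite finset.eqEsubset hsub /=; exact.
  have key : forall h', in_ker A h' -> supp h' = supp h ->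
      0 < h' j0 0 * z j0 0 -> False.
    move=> h' h'ker sh' pos.
    have hz0' : forall j, z j 0 = 0 -> h' j 0 = 0.
      by apply: supp_sub_zero; rewrite sh'.
    have [t [k0 [t0 zk wk wconf]]] := reduce hz0' pos.
    pose w := z - t *: h'.
    have wE : forall j, w j 0 = z j 0 - t * h' j 0 by move=> j; rewrite !mxE.
    apply: nex; exists w; split.
    - apply/eqP => /matrixP /(_ k1 0); rewrite wE !mxE.
      have : k1 \notin supp h' by rewrite sh'.
      rewrite inE negbK => /eqP ->; rewrite mulr0 subr0 => e.
      by move: k1z; rewrite inE e eqxx.
    - by rewrite /in_ker /w mulmxBr -scalemxAr hk h'ker scaler0 subr0.
    - by move=> j; rewrite wE.
    - apply/fintype.subsetP => j; rewrite !inE wE; apply: contraNN => /eqP zj.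
      by rewrite zj (hz0' _ zj) mulr0 subrr.
    - apply/eqP => /setP /(_ k0); rewrite !inE wE wk eqxx /= => e.
      by move: zk; rewrite -e.
  have [p|p|p] := ltgtP 0 (h j0 0 * z j0 0).
  - exact: key h hker erefl p.
  - apply: key (- h) _ _ _.
    + by rewrite /in_ker mulmxN hker oppr0.
    + by apply/setP => x; rewrite !inE mxE oppr_eq0.
    + by rewrite mxE mulNr oppr_gt0.
  - by move/eqP: p; rewrite eq_sym mulf_eq0 (negbTE hj0) (negbTE zj0).
have [jN [jNN zjN]] : exists j, j \in N /\ z j 0 != 0.
  case: (pselect (exists j, j \in N /\ z j 0 != 0)) => // ne; exfalso.
  move/eqP: zn0; apply; apply: (ker_full rk hk) => j jN.
  by apply/eqP; apply/negPn/negP => zj; apply: ne; exists j.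
have k0 := kappa_ge0.
have n10 : 0 <= norm1_on z N by apply: sumr_ge0.
have zjle : `|z jN 0| <= norm1_on z N.
  by rewrite /norm1_on (bigD1 jN) //= lerDl sumr_ge0.
have [zi|zi] := eqVneq (z i 0) 0; first by rewrite zi normr0 mulr_ge0.
have r : `|z i 0| / `|z jN 0| <= kappa A.
  apply: kset_le; exists z, i, jN; split => //; rewrite inE //.
have -> : `|z i 0| = (`|z i 0| / `|z jN 0|) * `|z jN 0|.
  by rewrite divfK // normr_eq0.
apply: le_trans (ler_wpM2r (normr_ge0 _) r) _.
exact: ler_wpM2l.
Qed.

End K.
End S.
Unset Implicit Arguments. Set Strict Implicit.

Theorem lemma2p6 (R : realType) (m n : nat) (A : 'M[R]_(m, n)) (N : {set 'I_n}) :
  \rank (colsubset A (~: N)) = #|~: N| ->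
  forall z : 'cV[R]_n, in_ker A z ->
    norm_inf z <= kappa A * norm1_on z N.
Proof.
move=> rk z hk; rewrite /norm_inf; apply: bigmax_le.
  by apply: mulr_ge0; [exact: kappa_ge0 | apply: sumr_ge0].
by move=> i _; apply: (main rk (k := #|supp z|.+1)).
Qed.
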